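(* Let $(\alpha,\beta)\in\mathcal{A}(K,L,T)$, let $p$ (resp. $q$) be the vector of entries of $\alpha$ (resp. $\beta$) sorted increasingly, and let $a=\min\operatorname{Set}(\alpha)$, $A=\max\operatorname{Set}(\alpha)$, $b=\min\operatorname{Set}(\beta)$, $B=\max\operatorname{Set}(\beta)$. (1) If $1\le i<K+T$ and $p_i+B<(p_{i+1}-1)+b$, then $(\alpha',\beta)\in\mathcal{A}(K,L,T)$ and $\operatorname{N}(\alpha',\beta)=\operatorname{N}(\alpha,\beta)$, where $\alpha'_j=\alpha_j$ if $\alpha_j\le p_i$ and $\alpha'_j=\alpha_j-1$ otherwise (the splitting of $\alpha'$ into prefix of length $K$ and suffix of length $T$ being the same as for $\alpha$). (2) If $1\le i<L+T$ and $q_i+A<(q_{i+1}-1)+a$, then $(\alpha,\beta')\in\mathcal{A}(K,L,T)$ and $\operatorname{N}(\alpha,\beta')=\operatorname{N}(\alpha,\beta)$, where $\beta'_j=\beta_j$ if $\beta_j\le q_i$ and $\beta'_j=\beta_j-1$ otherwise.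
   Context: A degree table with parameters $K,L,T$ is a tuple $(\alpha_{\mathrm p},\alpha_{\mathrm s},\beta_{\mathrm p},\beta_{\mathrm s})$ of nonnegative integer vectors of lengths $K,T,L,T$ such that, with $\alpha=(\alpha_{\mathrm p}\mid\alpha_{\mathrm s})$ and $\beta=(\beta_{\mathrm p}\mid\beta_{\mathrm s})$: (i) entries of $\alpha$ are distinct; (ii) entries of $\beta$ are distinct; (iii) for every integer $n\in\operatorname{Set}(\alpha_{\mathrm p})+\operatorname{Set}(\beta_{\mathrm p})$ there is a unique $i\in\operatorname{Set}(\alpha)$ and unique $j\in\operatorname{Set}(\beta)$ with $n=i+j$. $\operatorname{Set}(v)$ is the set of entries of $v$, $A+B=\{a+b\}$, $\mathcal{A}(K,L,T)$ is the set of degree tables and $\operatorname{N}(\alpha,\beta)=|\operatorname{Set}(\alpha)+\operatorname{Set}(\beta)|$. *)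

(* Defs.v *)
From mathcomp Require Import all_boot.
Set Implicit Arguments. Unset Strict Implicit. Unset Printing Implicit Defensive.

(* Vectors of nonnegative integers are tuples of nat; Set(v) is the seq of
   entries (membership via \in). *)

Definition sumset (A B : seq nat) : seq nat := [seq a + b | a <- A, b <- B].

Definition Nsum (alpha beta : seq nat) : nat := size (undup (sumset alpha beta)).

(* Degree table condition. alpha = ap ++ as_, beta = bp ++ bs. *)
Definition degree_table (K L T : nat) (ap : K.-tuple nat) (as_ : T.-tuple nat)
    (bp : L.-tuple nat) (bs : T.-tuple nat) : Prop :=
  [/\ uniq (ap ++ as_),
      uniq (bp ++ bs) &
      forall n, n \in sumset ap bp ->
        exists! ij : nat * nat,
          [/\ ij.1 \in (ap ++ as_ : seq nat), ij.2 \in (bp ++ bs : seq nat)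
            & n = ij.1 + ij.2] ].

(* minimum / maximum of the set of entries (default 0 for the empty seq) *)
Definition minseq (s : seq nat) : nat := foldr minn (head 0 s) s.
Definition maxseq (s : seq nat) : nat := foldr maxn 0 s.

(* p_i (1-based) : i-th smallest entry of s *)
Definition sorted_nth (s : seq nat) (i : nat) : nat := nth 0 (sort leq s) i.-1.

Definition shift_down (c x : nat) : nat := if x <= c then x else x - 1.

(* Main.v *)
Require Import Defs.
From mathcomp Require Import all_boot zify.

Lemma minseq_le {s y} : y \in s -> minseq s <= y.
Proof.
rewrite /minseq; elim: s (head 0 s) => [//|x s IH] d /=.
rewrite in_cons => /orP [/eqP ->|/IH H]; rewrite geq_min ?leqnn //.
by rewrite (H d) orbT.
Qed.

Lemma maxseq_ge {s y} : y \in s -> y <= maxseq s.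
Proof.
rewrite /maxseq; elim: s => [//|x s IH] /=.
rewrite in_cons => /orP [/eqP ->|/IH H]; rewrite leq_max ?leqnn //.
by rewrite H orbT.
Qed.

Lemma min_le_max s : minseq s <= maxseq s.
Proof.
case: s => [//|x s].
have h1 := minseq_le (mem_head x s). have h2 := maxseq_ge (mem_head x s).
exact: leq_trans h1 h2.
Qed.

Lemma dichot (al : seq nat) i x : 1 <= i < size al -> x \in al ->
  x <= sorted_nth al i \/ sorted_nth al i.+1 <= x.
Proof.
move=> /andP [i1 isz] xa.
have : x \in sort leq al by rewrite mem_sort.
case/(nthP 0) => k; rewrite size_sort => ks <-.
have so := sort_sorted leq_total al.
have HH := sorted_leq_nth leq_trans leqnn 0 so.
rewrite /sorted_nth /=.
have [ki|ik] := leqP k i.-1.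
  left; apply: HH => //; rewrite ?inE ?size_sort //=; lia.
right; apply: HH => //; rewrite ?inE ?size_sort //=; lia.
Qed.

Lemma facts (al be : seq nat) i : 1 <= i < size al ->
  sorted_nth al i + maxseq be < sorted_nth al i.+1 - 1 + minseq be ->
  [/\ forall x y, x \in al -> y \in be -> shift_down (sorted_nth al i) x + y =
        (fun s => if s <= sorted_nth al i + maxseq be then s else s - 1) (x + y),
     {in sumset al be &, injective (fun s => if s <= sorted_nth al i + maxseq be then s else s - 1)} &
     {in al &, injective (shift_down (sorted_nth al i))}].
Proof.
move=> Hi Hl.
have mm := min_le_max be.
set P := sorted_nth al i in Hl *; set Q := sorted_nth al i.+1 in Hl *.
set b := minseq be in Hl mm *; set B := maxseq be in Hl mm *.
have dic : forall x, x \in al -> x <= P \/ Q <= x by move=> x; exact: dichot.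
have bnd : forall y, y \in be -> b <= y <= B.
  by move=> y yb; rewrite minseq_le ?maxseq_ge.
have sdic : forall u, u \in sumset al be -> u <= P + B \/ P + B + 2 <= u.
  move=> u /allpairsP [[x y] [/= xa yb ->]].
  have := bnd y yb; case: (dic x xa) => H /andP[h1 h2]; lia.
split.
- move=> x y xa yb; have := bnd y yb; rewrite /shift_down.
  case: (dic x xa) => H /andP[h1 h2].
    by rewrite H ifT //; lia.
  rewrite ifF; last lia. rewrite ifF; lia.
- move=> u v /sdic Hu /sdic Hv /=.
  case: (leqP u (P + B)) => h1; case: (leqP v (P + B)) => h2; lia.
- move=> x y /dic Hx /dic Hy; rewrite /shift_down.
  case: (leqP x P) => h1; case: (leqP y P) => h2; lia.
Qed.

Lemma size_undup_inj (s : seq nat) (h : nat -> nat) : {in s &, injective h} ->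
  size (undup (map h s)) = size (undup s).
Proof.
move=> hi; rewrite -(size_map h (undup s)); apply: perm_size; apply: uniq_perm.
- exact: undup_uniq.
- rewrite map_inj_in_uniq ?undup_uniq // => x y; rewrite !mem_undup; exact: hi.
- move=> z; rewrite mem_undup; apply/mapP/mapP => [[x xs ->]|[x]].
    by exists x; rewrite ?mem_undup.
  by rewrite mem_undup => xs ->; exists x.
Qed.

Lemma Nsum_eq (al be al' be' : seq nat) :
  sumset al be =i sumset al' be' -> Nsum al be = Nsum al' be'.
Proof.
move=> E; apply: perm_size; apply: uniq_perm; rewrite ?undup_uniq // => z.
by rewrite !mem_undup E.
Qed.

Lemma core1 (al be ap bp : seq nat) (f h : nat -> nat) :
  (forall x y, x \in al -> y \in be -> f x + y = h (x + y)) ->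
  {in sumset al be &, injective h} ->
  {in al &, injective f} ->
  {subset ap <= al} -> {subset bp <= be} -> uniq al ->
  (forall n, n \in sumset ap bp -> exists! ij : nat * nat,
       [/\ ij.1 \in al, ij.2 \in be & n = ij.1 + ij.2]) ->
  [/\ uniq (map f al),
      (forall n, n \in sumset (map f ap) bp -> exists! ij : nat * nat,
         [/\ ij.1 \in map f al, ij.2 \in be & n = ij.1 + ij.2]) &
      Nsum (map f al) be = Nsum al be].
Proof.
move=> key hi fi sa sb ua U; split.
- by rewrite map_inj_in_uniq.
- move=> n /allpairsP [[u y] [/= /mapP [x xa ->] yb ->]].
  exists (f x, y); split.
    by split => //=; rewrite ?map_f ?sa ?sb.
  move=> [u' v] [/= /mapP [x' xa' ->] vb E].
  have xal := sa x xa; have ybe := sb y yb.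
  have E2 : x' + v = x + y.
    apply: hi; rewrite ?allpairs_f //.
    by rewrite -key // -key // -E.
  have [[x0 y0] [_ Hu]] := U (x + y) (allpairs_f _ xa yb).
  have e1 := Hu (x, y) (And3 xal ybe erefl).
  have e2 := Hu (x', v) (And3 xa' vb (esym E2)).
  by case: (etrans (esym e1) e2) => <- <-.
- rewrite /Nsum -(@size_undup_inj _ _ hi); apply: perm_size; apply: uniq_perm; rewrite ?undup_uniq // => z; rewrite !mem_undup.
  apply/allpairsP/mapP => [[[u y] [/= /mapP [x xa ->] yb ->]]|[w /allpairsP [[x y] [/= xa yb ->]] ->]].
    by exists (x + y); rewrite ?allpairs_f ?key.
  by exists (f x, y); rewrite /= ?map_f ?key.
Qed.

Lemma sumsetC (A B : seq nat) : sumset A B =i sumset B A.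
Proof.
move=> z; apply/allpairsP/allpairsP => [[[x y] [/= xa yb ->]]|[[x y] [/= xa yb ->]]];
  by exists (y, x); rewrite /= addnC.
Qed.

Lemma exu_swap (A B : seq nat) n :
  (exists! ij : nat * nat, [/\ ij.1 \in A, ij.2 \in B & n = ij.1 + ij.2]) ->
  exists! ij : nat * nat, [/\ ij.1 \in B, ij.2 \in A & n = ij.1 + ij.2].
Proof.
move=> [[x y] [[/= xa yb E] U]]; exists (y, x); split; first by split => //; rewrite addnC.
move=> [u v] [/= ub va E']; have := U (v, u) (And3 va ub (etrans E' (addnC _ _))).
by case=> -> ->.
Qed.

Theorem lemma4 (K L T : nat) (ap : K.-tuple nat) (as_ : T.-tuple nat)
    (bp : L.-tuple nat) (bs : T.-tuple nat) :
  degree_table ap as_ bp bs ->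
  let alpha := (ap ++ as_ : seq nat) in
  let beta := (bp ++ bs : seq nat) in
  let a := minseq alpha in let A := maxseq alpha in
  let b := minseq beta in let B := maxseq beta in
  (forall i, 1 <= i < K + T ->
     sorted_nth alpha i + B < (sorted_nth alpha i.+1 - 1) + b ->
     let f := shift_down (sorted_nth alpha i) in
     degree_table (map_tuple f ap) (map_tuple f as_) bp bs /\
     Nsum (map f alpha) beta = Nsum alpha beta) /\
  (forall i, 1 <= i < L + T ->
     sorted_nth beta i + A < (sorted_nth beta i.+1 - 1) + a ->
     let g := shift_down (sorted_nth beta i) in
     degree_table ap as_ (map_tuple g bp) (map_tuple g bs) /\
     Nsum alpha (map g beta) = Nsum alpha beta).
Proof.
case=> ua ub U alpha beta a A b B; split.
- move=> i Hi Hl f.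
  have Hi' : 1 <= i < size alpha by rewrite size_cat !size_tuple.
  have [key hi fi] := @facts _ _ _ Hi' Hl.
  have sa : {subset ap <= alpha} by move=> x xa; rewrite mem_cat xa.
  have sb : {subset bp <= beta} by move=> x xa; rewrite mem_cat xa.
  have [u' U' N'] := @core1 _ _ _ _ _ _ key hi fi sa sb ua U.
  by split => //; split => //=; rewrite -map_cat.
- move=> i Hi Hl g.
  have Hi' : 1 <= i < size beta by rewrite size_cat !size_tuple.
  have [key hi gi] := @facts _ _ _ Hi' Hl.
  have sa : {subset ap <= alpha} by move=> x xa; rewrite mem_cat xa.
  have sb : {subset bp <= beta} by move=> x xa; rewrite mem_cat xa.
  have U2 : forall n, n \in sumset bp ap -> exists! ij : nat * nat,
       [/\ ij.1 \in beta, ij.2 \in alpha & n = ij.1 + ij.2].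
    by move=> n; rewrite sumsetC => /U; apply: exu_swap.
  have [u' U' N'] := @core1 _ _ _ _ _ _ key hi gi sb sa ub U2.
  split.
    split => //=; rewrite -?map_cat //.
    by move=> n; rewrite sumsetC => /U'; apply: exu_swap.
  rewrite (@Nsum_eq _ _ (map g beta) alpha); last exact: sumsetC.
  rewrite N'; apply: Nsum_eq; exact: sumsetC.
Qed.
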